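(* Let $D$ be a finite distributive lattice with exactly two coatoms and let $Q=D\setminus\{1_D\}$. Then there is no algebra $A$ with a lattice isomorphism $\phi\colon\mathrm{Con}(A)\to D$ such that $\phi(\mathrm{Princ}(A))=Q$.
   Context: For an algebra $A$, $\mathrm{Con}(A)$ is its congruence lattice and $\mathrm{Princ}(A)$ its set of principal congruences $\mathrm{con}(a,b)$, $a,b\in A$. *)

(* Defs.v *)
From HB Require Import structures.
From mathcomp Require Import all_boot all_order.
Set Implicit Arguments. Unset Strict Implicit. Unset Printing Implicit Defensive.
Import Order.TTheory.
Local Open Scope order_scope.

Record algebra := Algebra {
  carrier : Type;
  opsym : Type;
  arity : opsym -> nat;
  ops : forall f : opsym, ('I_(arity f) -> carrier) -> carrier
}.

Definition rel_sub (A : Type) (r s : A -> A -> Prop) := forall x y, r x y -> s x y.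

Definition is_congruence (A : algebra) (r : carrier A -> carrier A -> Prop) :=
  [/\ (forall x, r x x),
      (forall x y, r x y -> r y x),
      (forall x y z, r x y -> r y z -> r x z) &
      (forall (f : opsym A) (u v : 'I_(arity f) -> carrier A),
          (forall i, r (u i) (v i)) -> r (ops u) (ops v))].

Definition con (A : algebra) (a b : carrier A) : carrier A -> carrier A -> Prop :=
  fun x y => forall r, is_congruence r -> r a b -> r x y.

(* A lattice isomorphism Con(A) -> D, i.e. a bijection between the congruences
   of A (up to extensional equality) and D which preserves and reflects the order. *)
Definition con_lattice_iso (A : algebra) (disp : Order.disp_t) (D : porderType disp)
    (phi : (carrier A -> carrier A -> Prop) -> D) :=
  (forall r s, is_congruence r -> is_congruence s ->
      (rel_sub r s <-> phi r <= phi s)) /\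
  (forall d : D, exists2 r, is_congruence r & phi r = d).

Definition coatom (disp : Order.disp_t) (D : finTBDistrLatticeType disp) (x : D) : bool :=
  (x < \top) && [forall y : D, ~~ ((x < y) && (y < \top))].

(* Main.v *)
Require Import Defs.
From HB Require Import structures.
From mathcomp Require Import all_boot all_order.
From Stdlib Require Import Classical.
Import Order.TTheory.
Local Open Scope order_scope.

Lemma con_cong {A : algebra} (a b : carrier A) : is_congruence (con a b).
Proof.
split.
- by move=> x r [R _ _ _] _; apply: R.
- by move=> x y H r Hr Hab; case: (Hr) => _ S _ _; apply: S; apply: H.
- by move=> x y z H1 H2 r Hr Hab; case: (Hr) => _ _ T _; apply: (T _ y); [apply: H1|apply: H2].
- move=> f u v H r Hr Hab; case: (Hr) => _ _ _ O; apply: O => i; exact: H.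
Qed.

Lemma con_ab {A : algebra} (a b : carrier A) : con a b a b.
Proof. by move=> r _. Qed.

Lemma below_coatom {disp : Order.disp_t} {D : finTBDistrLatticeType disp} :
  forall n (x : D), (#|[set y : D | (x < y)%O]| <= n)%N -> x < \top ->
  exists c, coatom c && (x <= c).
Proof.
elim=> [|n IH] x Hn Hx.
  have : \top \in [set y : D | x < y] by rewrite inE.
  by move=> Hin; move: Hn; rewrite leqn0 => /eqP/cards0_eq => E; rewrite E inE in Hin.
case Hc: (coatom x); first by exists x; rewrite Hc lexx.
move: Hc; rewrite /coatom Hx /= => /negbT; rewrite negb_forall => /existsP [y].
rewrite negbK => /andP [xy yt].
have [c /andP [cc yc]] : exists c, coatom c && (y <= c).
  apply: (IH y) => //.
  have Hsub : [set z : D | y < z] \proper [set z : D | x < z].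
    apply/properP; split.
      by apply/subsetP => z; rewrite !inE => /(lt_trans xy).
    by exists y; rewrite !inE ?ltxx.
  by move: (proper_card Hsub) => H; rewrite -ltnS; apply: leq_trans H Hn.
by exists c; apply/andP; split => //; exact: (le_trans (ltW xy) yc).
Qed.

Lemma two_equiv {T : Type} {al be : T -> T -> Prop} :
  (forall x y, al x y -> al y x) -> (forall x y z, al x y -> al y z -> al x z) ->
  (forall x y, be x y -> be y x) -> (forall x y z, be x y -> be y z -> be x z) ->
  (forall x y, al x y \/ be x y) -> forall {x y u v},
  ~ al x y -> ~ be u v -> False.
Proof.
move=> aS aT bS bT U x y u v nxy nuv.
have bxy : be x y by case: (U x y).
have auv : al u v by case: (U u v).
have case1 : al x u -> False.
  move=> axu.
  have byu : be y u.
    case: (U y u) => // ayu; exfalso; apply: nxy; apply: (aT _ u) => //; exact: aS.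
  case: (U y v) => [ayv|byv].
    apply: nxy; apply: (aT _ u) => //; apply: (aT _ v) => //; exact: aS.
  apply: nuv; apply: (bT _ y) => //; exact: bS.
case: (U x u) => [|bxu]; first exact: case1.
case: (U x v) => [axv|bxv].
  apply: case1; apply: (aT _ v) => //; exact: aS.
apply: nuv; apply: (bT _ x) => //; exact: bS.
Qed.

Theorem mainTheorem12 (disp : Order.disp_t) (D : finTBDistrLatticeType disp) :
  #|[set x : D | coatom x]| = 2 ->
  ~ exists (A : algebra) (phi : (carrier A -> carrier A -> Prop) -> D),
      con_lattice_iso phi /\
      (forall a b : carrier A, phi (con a b) != \top) /\
      (forall d : D, d != \top -> exists a b : carrier A, phi (con a b) = d).
Proof.
move=> /eqP/cards2P [c1 [c2 [neq E]]] [A [phi [[Hiso Hsurj] [Hnt _]]]].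
have : c1 \in [set x : D | coatom x] by rewrite E !inE eqxx.
rewrite inE => Hc1.
have : c2 \in [set x : D | coatom x] by rewrite E !inE eqxx orbT.
rewrite inE => Hc2.
have [al Hal Eal] := Hsurj c1.
have [be Hbe Ebe] := Hsurj c2.
have Hall : is_congruence (fun _ _ : carrier A => True) by split.
have notall (r : carrier A -> carrier A -> Prop) (c : D) :
    is_congruence r -> phi r = c -> coatom c -> exists x y, ~ r x y.
  move=> Hr Er /andP [ct _].
  apply: NNPP => Hn.
  have Hsub : rel_sub (fun _ _ : carrier A => True) r.
    move=> x y _; apply: NNPP => H; apply: Hn; by exists x, y.
  have [t Ht Et] := Hsurj \top.
  have : phi t <= phi r.
    apply/(Hiso _ _ Ht Hr) => x y _; exact: Hsub.
  rewrite Et Er => H; move: ct; rewrite lt_neqAle lex1 andbT => /negP; apply.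
  by rewrite eq_le H lex1.
have [x [y nxy]] := notall _ _ Hal Eal Hc1.
have [u [v nuv]] := notall _ _ Hbe Ebe Hc2.
have Hal' := Hal; have Hbe' := Hbe.
case: Hal' => _ aS aT _; case: Hbe' => _ bS bT _.
suff U : forall a b, al a b \/ be a b by exact: (two_equiv aS aT bS bT U nxy nuv).
move=> a b.
have Hlt : phi (con a b) < \top by rewrite lt_neqAle Hnt lex1.
have [c /andP [cc le]] := below_coatom _ _ (leqnn _) Hlt.
have : c \in [set x : D | coatom x] by rewrite inE.
rewrite E !inE => /orP [] /eqP Ec; subst c.
  left; apply: (proj2 (Hiso _ _ (con_cong a b) Hal)); [by rewrite Eal|exact: con_ab].
right; apply: (proj2 (Hiso _ _ (con_cong a b) Hbe)); [by rewrite Ebe|exact: con_ab].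
Qed.
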